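(* Let $T\in B(H)$ with $W_{\rm e}(T)\supset\overline{\mathbb D}$. Then there exist mutually orthogonal closed subspaces $H_k\subset H$, $k\in\mathbb N$, such that $W_{\rm e}(P_{H_k}T|_{H_k})\supset\overline{\mathbb D}$ for every $k\in\mathbb N$.
   Context: $H$ is an infinite-dimensional complex separable Hilbert space; $\mathbb D$ is the open unit disc. For an operator $A$ on a Hilbert space, $W_{\rm e}(A)$ is the set of $\lambda\in\mathbb C$ with $\langle Ax_k,x_k\rangle\to\lambda$ for some orthonormal sequence $(x_k)$. $P_{H_k}$ is the orthogonal projection onto $H_k$ and $P_{H_k}T|_{H_k}\in B(H_k)$ is the compression. *)

(* Defs.v *)
From Stdlib Require Import Reals.
Open Scope R_scope.

Definition C := (R * R)%type.
Definition C0 : C := (0, 0).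
Definition C1 : C := (1, 0).
Definition Cadd (a b : C) : C := (fst a + fst b, snd a + snd b).
Definition Cmul (a b : C) : C :=
  (fst a * fst b - snd a * snd b, fst a * snd b + snd a * fst b).
Definition Cconj (a : C) : C := (fst a, - snd a).
Definition Cmod (a : C) : R := sqrt (fst a * fst a + snd a * snd a).
Definition Csub (a b : C) : C := (fst a - fst b, snd a - snd b).

Definition Ccv (u : nat -> C) (l : C) : Prop :=
  forall eps, eps > 0 -> exists N, forall n, (n >= N)%nat -> Cmod (Csub (u n) l) < eps.

Definition in_closed_disc (z : C) : Prop := Cmod z <= 1.

(* An infinite-dimensional complex separable Hilbert space
   (inner product linear in the first variable). *)
Record CHilbert := {
  hs :> Type;
  hzero : hs;
  hadd : hs -> hs -> hs;
  hopp : hs -> hs;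
  hscal : C -> hs -> hs;
  inner : hs -> hs -> C;
  hadd_assoc : forall x y z, hadd x (hadd y z) = hadd (hadd x y) z;
  hadd_comm : forall x y, hadd x y = hadd y x;
  hadd_zero : forall x, hadd x hzero = x;
  hadd_opp : forall x, hadd x (hopp x) = hzero;
  hscal_one : forall x, hscal C1 x = x;
  hscal_assoc : forall a b x, hscal a (hscal b x) = hscal (Cmul a b) x;
  hscal_distr_v : forall a x y, hscal a (hadd x y) = hadd (hscal a x) (hscal a y);
  hscal_distr_s : forall a b x, hscal (Cadd a b) x = hadd (hscal a x) (hscal b x);
  inner_add_l : forall x y z, inner (hadd x y) z = Cadd (inner x z) (inner y z);
  inner_scal_l : forall a x y, inner (hscal a x) y = Cmul a (inner x y);
  inner_conj_sym : forall x y, inner y x = Cconj (inner x y);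
  inner_pos : forall x, 0 <= fst (inner x x);
  inner_definite : forall x, fst (inner x x) = 0 -> x = hzero;
  hcomplete : forall u : nat -> hs,
    (forall eps, eps > 0 -> exists N, forall n m, (n >= N)%nat -> (m >= N)%nat ->
       sqrt (fst (inner (hadd (u n) (hopp (u m))) (hadd (u n) (hopp (u m))))) < eps) ->
    exists l, forall eps, eps > 0 -> exists N, forall n, (n >= N)%nat ->
       sqrt (fst (inner (hadd (u n) (hopp l)) (hadd (u n) (hopp l)))) < eps;
  hseparable : exists d : nat -> hs, forall x eps, eps > 0 -> exists n,
       sqrt (fst (inner (hadd x (hopp (d n))) (hadd x (hopp (d n))))) < eps;
  hinfinite : exists e : nat -> hs, forall i j,
       inner (e i) (e j) = if Nat.eqb i j then C1 else C0
}.

Arguments hzero {_}.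
Arguments hadd {_} _ _.
Arguments hopp {_} _.
Arguments hscal {_} _ _.
Arguments inner {_} _ _.

Section Ops.
Context {H : CHilbert}.

Definition hsub (x y : H) : H := hadd x (hopp y).
Definition hnorm (x : H) : R := sqrt (fst (inner x x)).

Definition hcv (u : nat -> H) (l : H) : Prop :=
  forall eps, eps > 0 -> exists N, forall n, (n >= N)%nat -> hnorm (hsub (u n) l) < eps.

Definition bounded_operator (T : H -> H) : Prop :=
  (forall x y, T (hadd x y) = hadd (T x) (T y)) /\
  (forall a x, T (hscal a x) = hscal a (T x)) /\
  (exists M, forall x, hnorm (T x) <= M * hnorm x).

Definition closed_subspace (S : H -> Prop) : Prop :=
  S hzero /\
  (forall x y, S x -> S y -> S (hadd x y)) /\
  (forall a x, S x -> S (hscal a x)) /\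
  (forall u l, (forall n, S (u n)) -> hcv u l -> S l).

Definition orthonormal_seq (x : nat -> H) : Prop :=
  forall i j, inner (x i) (x j) = if Nat.eqb i j then C1 else C0.

Definition is_orth_proj (S : H -> Prop) (x y : H) : Prop :=
  S y /\ forall z, S z -> inner (hsub x y) z = C0.

Definition ess_num_range (T : H -> H) (lam : C) : Prop :=
  exists x : nat -> H, orthonormal_seq x /\ Ccv (fun k => inner (T (x k)) (x k)) lam.

(* essential numerical range of the compression P_S T |_S, an operator on
   the Hilbert space S (with the inner product inherited from H):
   lam such that <P_S T x_k, x_k> -> lam for some orthonormal sequence (x_k) in S. *)
Definition ess_num_range_compression (S : H -> Prop) (T : H -> H) (lam : C) : Prop :=
  exists x : nat -> H, (forall k, S (x k)) /\ orthonormal_seq x /\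
    exists y : nat -> H, (forall k, is_orth_proj S (T (x k)) (y k)) /\
      Ccv (fun k => inner (y k) (x k)) lam.

End Ops.

(* Main.v *)
From Pilot Require Import Defs.
From Stdlib Require Import Reals.
Open Scope R_scope.
From Stdlib Require Import Lra Lia Psatz.
Open Scope R_scope.
Notation C := Pilot.Defs.C.
Notation C1 := Pilot.Defs.C1.

Arguments hadd_assoc {_} _ _ _.
Arguments hadd_comm {_} _ _.
Arguments hadd_zero {_} _.
Arguments hadd_opp {_} _.
Arguments hscal_one {_} _.
Arguments hscal_assoc {_} _ _ _.
Arguments hscal_distr_v {_} _ _ _.
Arguments hscal_distr_s {_} _ _ _.
Arguments inner_add_l {_} _ _ _.
Arguments inner_scal_l {_} _ _ _.
Arguments inner_conj_sym {_} _ _.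
Arguments inner_pos {_} _.
Arguments inner_definite {_} _ _.

Lemma Ceq (a b : C) : fst a = fst b -> snd a = snd b -> a = b.
Proof. destruct a, b; simpl; intros; subst; reflexivity. Qed.

Section Alg.
Context {H : CHilbert}.

Lemma hadd_zero_l (x : H) : hadd hzero x = x.
Proof. rewrite hadd_comm; apply hadd_zero. Qed.

Lemma hadd_cancel (a b : H) : hadd a b = a -> b = hzero.
Proof.
  intro E.
  assert (E2 : hadd (hopp a) (hadd a b) = hadd (hopp a) a) by (rewrite E; reflexivity).
  rewrite hadd_assoc, (hadd_comm (hopp a) a), hadd_opp, hadd_zero_l in E2. exact E2.
Qed.

Lemma opp_unique (x y : H) : hadd x y = hzero -> y = hopp x.
Proof.
  intro E.
  assert (E2 : hadd (hopp x) (hadd x y) = hadd (hopp x) hzero) by (rewrite E; reflexivity).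
  rewrite hadd_assoc, (hadd_comm (hopp x) x), hadd_opp, hadd_zero_l, hadd_zero in E2. exact E2.
Qed.

Lemma hscal_C0 (x : H) : hscal C0 x = hzero.
Proof.
  apply (hadd_cancel (hscal C0 x)).
  rewrite <- hscal_distr_s. f_equal. apply Ceq; unfold Cadd, C0; simpl; ring.
Qed.

Definition Cm1 : C := (-1, 0).

Lemma hopp_scal (x : H) : hopp x = hscal Cm1 x.
Proof.
  symmetry; apply opp_unique.
  rewrite <- (hscal_one x) at 1. rewrite <- hscal_distr_s.
  replace (Cadd C1 Cm1) with C0 by (apply Ceq; unfold Cadd, C0, C1, Cm1; simpl; ring).
  apply hscal_C0.
Qed.

Lemma hscal_zero (a : C) : hscal a (@hzero H) = hzero.
Proof.
  rewrite <- (hscal_C0 hzero), hscal_assoc.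
  replace (Cmul a C0) with C0 by (apply Ceq; unfold Cmul, C0; simpl; ring). reflexivity.
Qed.

Lemma inner_zero_l (y : H) : inner hzero y = C0.
Proof.
  rewrite <- (hscal_C0 hzero), inner_scal_l. apply Ceq; unfold Cmul, C0; simpl; ring.
Qed.

Lemma inner_zero_r (y : H) : inner y hzero = C0.
Proof.
  rewrite inner_conj_sym, inner_zero_l. apply Ceq; unfold Cconj, C0; simpl; ring.
Qed.

Lemma inner_add_r (x y z : H) : inner x (hadd y z) = Cadd (inner x y) (inner x z).
Proof.
  rewrite inner_conj_sym, inner_add_l, (inner_conj_sym y x), (inner_conj_sym z x).
  destruct (inner x y), (inner x z). apply Ceq; unfold Cadd, Cconj; simpl; ring.
Qed.

Lemma inner_scal_r (a : C) (x y : H) : inner x (hscal a y) = Cmul (Cconj a) (inner x y).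
Proof.
  rewrite inner_conj_sym, inner_scal_l, (inner_conj_sym y x).
  destruct (inner x y), a. apply Ceq; unfold Cmul, Cconj; simpl; ring.
Qed.

Lemma inner_opp_l (x y : H) : inner (hopp x) y = Cmul Cm1 (inner x y).
Proof. rewrite hopp_scal, inner_scal_l; reflexivity. Qed.

Lemma inner_opp_r (x y : H) : inner x (hopp y) = Cmul Cm1 (inner x y).
Proof. rewrite hopp_scal, inner_scal_r. f_equal. apply Ceq; unfold Cconj, Cm1; simpl; ring. Qed.

Lemma inner_sub_l (x y z : H) : inner (hsub x y) z = Csub (inner x z) (inner y z).
Proof.
  unfold hsub. rewrite inner_add_l, inner_opp_l. destruct (inner x z), (inner y z).
  apply Ceq; unfold Cadd, Cmul, Csub, Cm1; simpl; ring.
Qed.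

Lemma inner_sub_r (x y z : H) : inner x (hsub y z) = Csub (inner x y) (inner x z).
Proof.
  unfold hsub. rewrite inner_add_r, inner_opp_r. destruct (inner x y), (inner x z).
  apply Ceq; unfold Cadd, Cmul, Csub, Cm1; simpl; ring.
Qed.

Definition n2 (x : H) : R := fst (inner x x).

Lemma im_self (x : H) : snd (inner x x) = 0.
Proof.
  pose proof (inner_conj_sym x x) as E. destruct (inner x x) as [a b].
  unfold Cconj in E; simpl in *. injection E; intros; lra.
Qed.

Lemma n2_nonneg (x : H) : 0 <= n2 x.
Proof. apply inner_pos. Qed.

Lemma re_sym (x y : H) : fst (inner y x) = fst (inner x y).
Proof. rewrite inner_conj_sym. reflexivity. Qed.

Lemma im_sym (x y : H) : snd (inner y x) = - snd (inner x y).
Proof. rewrite inner_conj_sym. reflexivity. Qed.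

Lemma n2_add (x y : H) : n2 (hadd x y) = n2 x + n2 y + 2 * fst (inner x y).
Proof.
  unfold n2. rewrite inner_add_l, !inner_add_r. unfold Cadd; simpl.
  rewrite (re_sym x y). ring.
Qed.

Lemma n2_sub (x y : H) : n2 (hsub x y) = n2 x + n2 y - 2 * fst (inner x y).
Proof.
  unfold n2. rewrite inner_sub_l, !inner_sub_r. unfold Csub; simpl.
  rewrite (re_sym x y). ring.
Qed.

Lemma n2_scal (a : C) (x : H) : n2 (hscal a x) = (fst a * fst a + snd a * snd a) * n2 x.
Proof.
  unfold n2. rewrite inner_scal_l, inner_scal_r. pose proof (im_self x) as E.
  destruct (inner x x), a; unfold Cmul, Cconj; simpl in *. subst. ring.
Qed.

Lemma cs_re (x y : H) : fst (inner x y) * fst (inner x y) <= n2 x * n2 y.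
Proof.
  set (r := fst (inner x y)).
  destruct (Req_dec (n2 y) 0) as [Z|NZ].
  - apply inner_definite in Z. subst r. rewrite Z, inner_zero_r. simpl.
    pose proof (n2_nonneg x). unfold n2 at 2. rewrite inner_zero_l. simpl. lra.
  - pose proof (n2_nonneg y) as P.
    pose proof (n2_nonneg (hadd x (hscal (- r / n2 y, 0) y))) as Q.
    rewrite n2_add, n2_scal, inner_scal_r in Q.
    unfold Cmul, Cconj in Q; simpl in Q. fold r in Q.
    pose proof (n2_nonneg x).
    assert (Q' : 0 <= n2 x * n2 y - r * r).
    { replace (n2 x * n2 y - r*r) with (n2 y * (n2 x + (- r / n2 y * - r / n2 y + - 0 * - 0) * n2 y +
          2 * (- r / n2 y * r - - 0 * snd (inner x y)))) by (field; lra).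
      apply Rmult_le_pos; lra. }
    lra.
Qed.

Lemma im_as_re (x y : H) : snd (inner x y) = fst (inner x (hscal (0,1) y)).
Proof. rewrite inner_scal_r. unfold Cmul, Cconj; simpl. ring. Qed.

Lemma n2_i (y : H) : n2 (hscal (0,1) y) = n2 y.
Proof. rewrite n2_scal; simpl; ring. Qed.

Lemma cs_im (x y : H) : snd (inner x y) * snd (inner x y) <= n2 x * n2 y.
Proof. rewrite im_as_re, <- (n2_i y). apply cs_re. Qed.

Lemma hnorm_nonneg (x : H) : 0 <= hnorm x.
Proof. apply sqrt_pos. Qed.

Lemma hnorm_sq (x : H) : hnorm x * hnorm x = n2 x.
Proof. apply sqrt_sqrt, n2_nonneg. Qed.

Lemma sq_le_abs (a b : R) : 0 <= b -> a * a <= b * b -> Rabs a <= b.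
Proof.
  intros. destruct (Rle_dec (Rabs a) b); auto.
  assert (b < Rabs a) by lra. pose proof (Rabs_pos a).
  assert (b*b < Rabs a * Rabs a) by nra. rewrite <- Rabs_mult in *.
  rewrite Rabs_right in * by nra. lra.
Qed.

Lemma cs_re_abs (x y : H) : Rabs (fst (inner x y)) <= hnorm x * hnorm y.
Proof.
  apply sq_le_abs. apply Rmult_le_pos; apply hnorm_nonneg.
  replace (hnorm x * hnorm y * (hnorm x * hnorm y)) with ((hnorm x * hnorm x) * (hnorm y * hnorm y)) by ring.
  rewrite !hnorm_sq. apply cs_re.
Qed.

Lemma cs_im_abs (x y : H) : Rabs (snd (inner x y)) <= hnorm x * hnorm y.
Proof.
  apply sq_le_abs. apply Rmult_le_pos; apply hnorm_nonneg.
  replace (hnorm x * hnorm y * (hnorm x * hnorm y)) with ((hnorm x * hnorm x) * (hnorm y * hnorm y)) by ring.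
  rewrite !hnorm_sq. apply cs_im.
Qed.

Definition Cabs1 (z : C) : R := Rabs (fst z) + Rabs (snd z).

Lemma cs_abs1 (x y : H) : Cabs1 (inner x y) <= 2 * (hnorm x * hnorm y).
Proof. unfold Cabs1. pose proof (cs_re_abs x y); pose proof (cs_im_abs x y). lra. Qed.



Lemma le_sq (a b : R) : 0 <= a -> 0 <= b -> a * a <= b * b -> a <= b.
Proof. intros. nra. Qed.

Lemma hnorm_triangle (x y : H) : hnorm (hadd x y) <= hnorm x + hnorm y.
Proof.
  pose proof (hnorm_nonneg x); pose proof (hnorm_nonneg y).
  apply le_sq. apply hnorm_nonneg. lra.
  rewrite hnorm_sq, n2_add. rewrite <- (hnorm_sq x), <- (hnorm_sq y).
  pose proof (cs_re_abs x y). pose proof (Rle_abs (fst (inner x y))). nra.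
Qed.

End Alg.
Section Sums.
Context {H : CHilbert}.

Fixpoint hsum (f : nat -> H) (n : nat) : H :=
  match n with 0 => hzero | S m => hadd (hsum f m) (f m) end.
Fixpoint Csum (f : nat -> C) (n : nat) : C :=
  match n with 0 => C0 | S m => Cadd (Csum f m) (f m) end.
Fixpoint Rsum (f : nat -> R) (n : nat) : R :=
  match n with 0 => 0 | S m => Rsum f m + f m end.

Lemma inner_hsum_l (f : nat -> H) n y : inner (hsum f n) y = Csum (fun i => inner (f i) y) n.
Proof. induction n; simpl. apply inner_zero_l. rewrite inner_add_l, IHn; reflexivity. Qed.

Lemma Csum_ext (f g : nat -> C) n : (forall i, (i < n)%nat -> f i = g i) -> Csum f n = Csum g n.
Proof. induction n; simpl; intros; auto. rewrite IHn, H0; auto. Qed.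

Lemma Rsum_ext (f g : nat -> R) n : (forall i, (i < n)%nat -> f i = g i) -> Rsum f n = Rsum g n.
Proof. induction n; simpl; intros; auto. rewrite IHn, H0; auto. Qed.

Lemma Csum_zero n : Csum (fun _ => C0) n = C0.
Proof. induction n; simpl; auto. rewrite IHn. apply Ceq; unfold Cadd, C0; simpl; ring. Qed.

Lemma Rsum_nonneg f n : (forall i, 0 <= f i) -> 0 <= Rsum f n.
Proof. induction n; simpl; intros; try lra. pose proof (H0 n). pose proof (IHn H0). lra. Qed.

Lemma Rsum_mono f n m : (forall i, 0 <= f i) -> (n <= m)%nat -> Rsum f n <= Rsum f m.
Proof. intros P L. induction L; simpl; try lra. pose proof (P m). lra. Qed.

Definition ONP (u : nat -> H) (P : nat -> bool) : Prop :=
  forall i j, P i = true -> P j = true -> inner (u i) (u j) = if Nat.eqb i j then C1 else C0.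

Definition cn2 (c : C) : R := fst c * fst c + snd c * snd c.

Lemma cn2_nonneg c : 0 <= cn2 c.
Proof. unfold cn2. nra. Qed.

Definition pj (u : nat -> H) (P : nat -> bool) (v : H) (n : nat) : H :=
  hsum (fun i => if P i then hscal (inner v (u i)) (u i) else hzero) n.

Definition bes (u : nat -> H) (P : nat -> bool) (v : H) (n : nat) : R :=
  Rsum (fun i => if P i then cn2 (inner v (u i)) else 0) n.

Lemma pj_S u P v n : pj u P v (S n) = hadd (pj u P v n) (if P n then hscal (inner v (u n)) (u n) else hzero).
Proof. reflexivity. Qed.
Lemma pj_0 u P v : pj u P v 0 = hzero.
Proof. reflexivity. Qed.
Lemma bes_S u P v n : bes u P v (S n) = bes u P v n + (if P n then cn2 (inner v (u n)) else 0).
Proof. reflexivity. Qed.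

Lemma pj_inner u P v n j : ONP u P -> P j = true ->
  inner (pj u P v n) (u j) = if Nat.ltb j n then inner v (u j) else C0.
Proof.
  intros O Pj. induction n. rewrite pj_0; apply inner_zero_l.
  rewrite pj_S, inner_add_l, IHn.
  destruct (P n) eqn:Pn.
  - rewrite inner_scal_l, (O n j Pn Pj).
    destruct (Nat.eqb_spec n j); destruct (Nat.ltb_spec j n); destruct (Nat.ltb_spec j (S n)); try lia;
      apply Ceq; unfold Cadd, Cmul, C0, C1; simpl; try subst; ring.
  - rewrite inner_zero_l.
    destruct (Nat.ltb_spec j n); destruct (Nat.ltb_spec j (S n)); try lia;
      try (apply Ceq; unfold Cadd, C0; simpl; ring).
    assert (j = n) by lia. subst. congruence.
Qed.

Lemma orth_pj u P v n w : (forall j, P j = true -> (j < n)%nat -> inner w (u j) = C0) ->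
  inner w (pj u P v n) = C0.
Proof.
  intros Hw. induction n. rewrite pj_0; apply inner_zero_r.
  rewrite pj_S, inner_add_r, IHn by (intros; apply Hw; auto; lia).
  destruct (P n) eqn:Pn.
  - rewrite inner_scal_r, Hw by auto. apply Ceq; unfold Cadd, Cmul, C0; simpl; ring.
  - rewrite inner_zero_r. apply Ceq; unfold Cadd, C0; simpl; ring.
Qed.

Lemma pj_resid u P v n j : ONP u P -> P j = true -> (j < n)%nat ->
  inner (hsub v (pj u P v n)) (u j) = C0.
Proof.
  intros O Pj L. rewrite inner_sub_l, pj_inner by auto.
  destruct (Nat.ltb_spec j n); try lia. apply Ceq; unfold Csub, C0; simpl; ring.
Qed.

Lemma n2_pj u P v n : ONP u P -> n2 (pj u P v n) = bes u P v n.
Proof.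
  intros O. induction n. rewrite pj_0; unfold n2; rewrite inner_zero_l; reflexivity.
  rewrite pj_S, bes_S, <- IHn.
  destruct (P n) eqn:Pn.
  - rewrite n2_add, n2_scal, inner_scal_r, pj_inner by auto.
    destruct (Nat.ltb_spec n n); try lia.
    unfold n2 at 2. rewrite (O n n Pn Pn), Nat.eqb_refl. unfold cn2, Cmul, Cconj, C0, C1; simpl. ring.
  - rewrite hadd_zero. ring.
Qed.

Lemma hsub_add_cancel (a b : H) : hadd (hsub a b) b = a.
Proof.
  unfold hsub. rewrite <- hadd_assoc, (hadd_comm (hopp b) b), hadd_opp, hadd_zero. reflexivity.
Qed.

Lemma pythag u P v n : ONP u P -> n2 v = n2 (hsub v (pj u P v n)) + bes u P v n.
Proof.
  intros O. rewrite <- (n2_pj u P v n O).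
  rewrite <- (hsub_add_cancel v (pj u P v n)) at 1. rewrite n2_add.
  rewrite orth_pj. simpl; ring.
  intros; apply pj_resid; auto.
Qed.

Lemma bessel u P v n : ONP u P -> bes u P v n <= n2 v.
Proof. intros O. rewrite (pythag u P v n O). pose proof (n2_nonneg (hsub v (pj u P v n))). lra. Qed.

End Sums.
From Stdlib Require Import Classical.

Lemma Rabs_sq (a : R) : Rabs a * Rabs a = a * a.
Proof. rewrite <- Rabs_mult. apply Rabs_right. nra. Qed.

Lemma Cmod_le_Cabs1 (z : C) : Cmod z <= Cabs1 z.
Proof.
  unfold Cmod, Cabs1. pose proof (Rabs_pos (fst z)); pose proof (Rabs_pos (snd z)).
  apply le_sq. apply sqrt_pos. lra.
  rewrite sqrt_sqrt by nra. pose proof (Rabs_sq (fst z)); pose proof (Rabs_sq (snd z)). nra.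
Qed.

Lemma Cabs1_le_Cmod (z : C) : Cabs1 z <= 2 * Cmod z.
Proof.
  unfold Cmod, Cabs1. pose proof (Rabs_pos (fst z)); pose proof (Rabs_pos (snd z)).
  pose proof (sqrt_pos (fst z * fst z + snd z * snd z)).
  apply le_sq. lra. lra.
  replace (2 * sqrt (fst z * fst z + snd z * snd z) * (2 * sqrt (fst z * fst z + snd z * snd z)))
    with (4 * (sqrt (fst z * fst z + snd z * snd z) * sqrt (fst z * fst z + snd z * snd z))) by ring.
  rewrite sqrt_sqrt by nra. pose proof (Rabs_sq (fst z)); pose proof (Rabs_sq (snd z)). nra.
Qed.

Lemma Cabs1_nonneg z : 0 <= Cabs1 z.
Proof. unfold Cabs1. pose proof (Rabs_pos (fst z)); pose proof (Rabs_pos (snd z)). lra. Qed.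

Lemma Cabs1_tri (a b m : C) : Cabs1 (Csub a b) <= Cabs1 (Csub a m) + Cabs1 (Csub m b).
Proof.
  unfold Cabs1, Csub; simpl.
  pose proof (Rabs_triang (fst a - fst m) (fst m - fst b)).
  pose proof (Rabs_triang (snd a - snd m) (snd m - snd b)).
  replace (fst a - fst m + (fst m - fst b)) with (fst a - fst b) in * by ring.
  replace (snd a - snd m + (snd m - snd b)) with (snd a - snd b) in * by ring. lra.
Qed.

Lemma Cabs1_le_sub (a b : C) : Cabs1 a <= Cabs1 b + Cabs1 (Csub a b).
Proof.
  unfold Cabs1, Csub; simpl.
  pose proof (Rabs_triang (fst b) (fst a - fst b)).
  pose proof (Rabs_triang (snd b) (snd a - snd b)).
  replace (fst b + (fst a - fst b)) with (fst a) in * by ring.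
  replace (snd b + (snd a - snd b)) with (snd a) in * by ring. lra.
Qed.

Lemma Cabs1_sub3 (a b c : C) : Cabs1 (Csub a (Cadd b c)) <= Cabs1 (Csub a b) + Cabs1 c.
Proof.
  unfold Cabs1, Csub, Cadd; simpl.
  pose proof (Rabs_triang (fst a - fst b) (- fst c)).
  pose proof (Rabs_triang (snd a - snd b) (- snd c)).
  rewrite Rabs_Ropp in *.
  replace (fst a - fst b + - fst c) with (fst a - (fst b + fst c)) in * by ring.
  replace (snd a - snd b + - snd c) with (snd a - (snd b + snd c)) in * by ring. lra.
Qed.

Lemma terms_to_zero (s : nat -> R) B : (forall k, 0 <= s k) -> (forall K, Rsum s K <= B) ->
  forall d, d > 0 -> exists N, forall k, (k >= N)%nat -> s k < d.
Proof.
  intros P Bd d dp. apply NNPP. intro NE.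
  assert (A : forall N, exists k, (k >= N)%nat /\ s k >= d).
  { intro N. apply NNPP. intro NE2. apply NE. exists N. intros k Hk.
    destruct (Rlt_le_dec (s k) d); auto. exfalso; apply NE2; exists k; split; auto; lra. }
  assert (G : forall m, exists K, Rsum s K >= INR m * d).
  { induction m. exists 0%nat. simpl. lra.
    destruct IHm as [K HK]. destruct (A K) as [k [Hk Hs]].
    exists (S k). change (Rsum s (S k)) with (Rsum s k + s k).
    pose proof (Rsum_mono s K k P Hk). rewrite S_INR. lra. }
  destruct (INR_unbounded (B / d)) as [m Hm]. destruct (G m) as [K HK].
  pose proof (Bd K). assert (INR m * d > B).
  { apply Rmult_gt_compat_r with (r := d) in Hm; [|lra].
    unfold Rdiv in Hm. rewrite Rmult_assoc, Rinv_l in Hm by lra. lra. }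
  lra.
Qed.

Lemma Rsum_plus f g n : Rsum (fun i => f i + g i) n = Rsum f n + Rsum g n.
Proof. induction n; simpl; lra. Qed.

Lemma Rsum_swap (f : nat -> nat -> R) n K :
  Rsum (fun k => Rsum (fun i => f k i) n) K = Rsum (fun i => Rsum (fun k => f k i) K) n.
Proof.
  induction K; simpl.
  - induction n; simpl; lra.
  - rewrite IHK. rewrite <- Rsum_plus. reflexivity.
Qed.

Lemma Rsum_le f g n : (forall i, (i < n)%nat -> f i <= g i) -> Rsum f n <= Rsum g n.
Proof. induction n; simpl; intros Hf; try lra. pose proof (Hf n (Nat.lt_succ_diag_r n)).
  assert (Rsum f n <= Rsum g n) by (apply IHn; intros; apply Hf; lia). lra. Qed.

Lemma Rsum_const n (c : R) : Rsum (fun _ => c) n = INR n * c.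
Proof. induction n. simpl; lra. rewrite S_INR. change (Rsum (fun _ => c) (S n)) with (Rsum (fun _ => c) n + c).
  rewrite IHn. ring. Qed.

Section Op.
Context {H : CHilbert}.
Variable T : H -> H.
Hypothesis Tlin : bounded_operator T.

Lemma T_zero : T hzero = hzero.
Proof.
  destruct Tlin as [_ [S _]]. rewrite <- (hscal_C0 hzero), S, !hscal_C0. reflexivity.
Qed.

Lemma T_sub x y : T (hsub x y) = hsub (T x) (T y).
Proof.
  destruct Tlin as [A [S _]]. unfold hsub. rewrite A, !hopp_scal, S. reflexivity.
Qed.

Lemma T_scal a x : T (hscal a x) = hscal a (T x).
Proof. destruct Tlin as [_ [S _]]. apply S. Qed.

Lemma T_bound : exists M, M > 0 /\ forall x, hnorm (T x) <= M * hnorm x.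
Proof.
  destruct Tlin as [_ [_ [M HM]]]. exists (Rabs M + 1). split. pose proof (Rabs_pos M); lra.
  intro x. pose proof (HM x). pose proof (hnorm_nonneg x). pose proof (Rle_abs M). nra.
Qed.

End Op.
Lemma Cabs1_add (a b : C) : Cabs1 (Cadd a b) <= Cabs1 a + Cabs1 b.
Proof.
  unfold Cabs1, Cadd; simpl.
  pose proof (Rabs_triang (fst a) (fst b)). pose proof (Rabs_triang (snd a) (snd b)). lra.
Qed.

Lemma Cabs1_m1 (a : C) : Cabs1 (Cmul Cm1 a) = Cabs1 a.
Proof.
  unfold Cabs1, Cmul, Cm1; simpl.
  replace (-1 * fst a - 0 * snd a) with (- fst a) by ring.
  replace (-1 * snd a + 0 * fst a) with (- snd a) by ring. rewrite !Rabs_Ropp. reflexivity.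
Qed.

Section Step.
Context {H : CHilbert}.
Variable T : H -> H.
Hypothesis Tlin : bounded_operator T.

Lemma step_exists (lam : C) (Hl : ess_num_range T lam) (u : nat -> H) (n : nat)
  (On : ONP u (fun i => Nat.ltb i n)) (eps : R) (ep : eps > 0) :
  exists x, inner x x = C1 /\ (forall i, (i < n)%nat -> inner x (u i) = C0) /\
    Cabs1 (Csub (inner (T x) x) lam) < eps.
Proof.
  destruct Hl as [xs [Oxs Cv]].
  destruct (T_bound T Tlin) as [M [Mp HM]].
  set (P := fun i => Nat.ltb i n).
  set (s := fun k => bes u P (xs k) n).
  assert (Ox : ONP xs (fun _ => true)).
  { intros i j _ _. apply Oxs. }
  assert (snn : forall k, 0 <= s k).
  { intro k. unfold s, bes. apply Rsum_nonneg. intro i. destruct (P i); [apply cn2_nonneg | lra]. }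
  assert (Sb : forall K, Rsum s K <= INR n).
  { intro K. unfold s, bes. rewrite Rsum_swap.
    rewrite <- (Rmult_1_r (INR n)), <- Rsum_const. apply Rsum_le. intros i Hi.
    assert (Pi : P i = true) by (unfold P; apply Nat.ltb_lt; auto).
    rewrite Pi.
    pose proof (bessel xs (fun _ => true) (u i) K Ox) as Bs.
    assert (n2 (u i) = 1) as N1. { unfold n2. rewrite (On i i Pi Pi), Nat.eqb_refl. reflexivity. }
    rewrite N1 in Bs. unfold bes in Bs.
    eapply Rle_trans; [|exact Bs]. right. apply Rsum_ext. intros k _.
    rewrite (inner_conj_sym (u i) (xs k)). unfold cn2, Cconj; simpl. ring. }
  set (del := eps / (32 * M)).
  assert (delp : del > 0) by (unfold del; apply Rdiv_lt_0_compat; lra).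
  set (dd := Rmin (1/2) (del * del)).
  assert (ddp : dd > 0) by (unfold dd; apply Rmin_pos; nra).
  destruct (terms_to_zero s (INR n) snn Sb dd ddp) as [N1 HN1].
  destruct (Cv (eps / 4)) as [N2 HN2]. lra.
  set (k := Nat.max N1 N2).
  specialize (HN1 k (Nat.le_max_l _ _)). specialize (HN2 k (Nat.le_max_r _ _)).
  pose (xk := xs k).
  set (p := pj u P xk n). set (d2 := s k).
  assert (d2nn : 0 <= d2) by apply snn.
  assert (d2le : d2 <= 1/2) by (pose proof (Rmin_l (1/2) (del*del)); fold dd in H0; unfold d2; lra).
  assert (d2del : d2 < del * del) by (pose proof (Rmin_r (1/2) (del*del)); fold dd in H0; unfold d2; lra).
  assert (nx : n2 xk = 1) by (unfold n2, xk; rewrite (Oxs k k), Nat.eqb_refl; reflexivity).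
  assert (np : n2 p = d2) by (unfold p, d2, s; apply n2_pj; auto).
  set (x' := hsub xk p).
  assert (nx' : n2 x' = 1 - d2).
  { pose proof (pythag u P xk n On) as E. change (bes u P xk n) with d2 in E.
    fold p x' in E. lra. }
  set (d := sqrt d2).
  assert (dnn : 0 <= d) by apply sqrt_pos.
  assert (dd2 : d * d = d2) by (apply sqrt_sqrt; lra).

  assert (ddel : d < del) by nra.
  assert (d1 : d <= 1) by nra.
  assert (hp : hnorm p = d) by (unfold hnorm, d; change (fst (inner p p)) with (n2 p); rewrite np; reflexivity).
  assert (hx : hnorm xk = 1) by (unfold hnorm; change (fst (inner xk xk)) with (n2 xk); rewrite nx; apply sqrt_1).
  assert (hx' : hnorm x' <= 1).
  { unfold hnorm; change (fst (inner x' x')) with (n2 x'); rewrite nx'.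
    apply Rle_trans with (sqrt 1); [apply sqrt_le_1_alt; lra | rewrite sqrt_1; lra]. }
  assert (s1p : 0 < sqrt (1 - d2)) by (apply sqrt_lt_R0; lra).
  set (c := / sqrt (1 - d2)).
  assert (cc : c * c * (1 - d2) = 1).
  { unfold c. rewrite <- Rinv_mult, sqrt_sqrt by lra. apply Rinv_l. lra. }
  assert (cc1 : 0 <= c * c - 1 <= 2 * d2).
  { assert (c * c = / (1 - d2)) as E.
    { apply (Rmult_eq_reg_r (1 - d2)); [rewrite cc, Rinv_l; lra | lra]. }
    rewrite E. split.
    - assert (/ (1 - d2) >= 1). { apply Rle_ge. rewrite <- Rinv_1. apply Rinv_le_contravar; lra. } lra.
    - assert (/ (1 - d2) - 1 = d2 / (1 - d2)) as E2 by (field; lra). rewrite E2.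
      unfold Rdiv. assert (/ (1 - d2) <= 2). { replace 2 with (/ (1/2)) by field. apply Rinv_le_contravar; lra. }
      assert (0 <= / (1 - d2)) by (left; apply Rinv_0_lt_compat; lra). nra. }
  set (e := hscal (c, 0) x').
  exists e. split; [|split].
  - unfold e. rewrite inner_scal_l, inner_scal_r.
    assert (Ix : inner x' x' = (1 - d2, 0)) by (apply Ceq; [exact nx' | apply im_self]).
    rewrite Ix. apply Ceq; unfold Cmul, Cconj, C1; simpl.
    + transitivity (c * c * (1 - d2)); [ring | exact cc].
    + ring.
  - intros i Hi. unfold e. rewrite inner_scal_l. unfold x', p. rewrite pj_resid; auto.
    + apply Ceq; unfold Cmul, C0; simpl; ring.
    + unfold P; apply Nat.ltb_lt; auto.
  - unfold e. rewrite T_scal by auto. rewrite inner_scal_l, inner_scal_r.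
    set (w := inner (T x') x'). set (q := inner (T xk) xk).
    assert (E1 : Cabs1 (Csub (Cmul (c, 0) (Cmul (Cconj (c, 0)) w)) w) = Rabs (c * c - 1) * Cabs1 w).
    { unfold Cabs1, Cmul, Cconj, Csub; simpl.
      replace (c * (c * fst w - - 0 * snd w) - 0 * (c * snd w + - 0 * fst w) - fst w) with ((c*c-1) * fst w) by ring.
      replace (c * (c * snd w + - 0 * fst w) + 0 * (c * fst w - - 0 * snd w) - snd w) with ((c*c-1) * snd w) by ring.
      rewrite !Rabs_mult. ring. }
    assert (E2 : Csub w q = Cadd (Cmul Cm1 (inner (T xk) p)) (Cmul Cm1 (inner (T p) x'))).
    { unfold w, x'. rewrite T_sub by auto. rewrite inner_sub_l. fold x'.
      unfold x' at 1. rewrite inner_sub_r. fold q. fold x'.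
      destruct (inner (T xk) p), (inner (T p) x'), q. apply Ceq; unfold Csub, Cadd, Cmul, Cm1; simpl; ring. }
    assert (B1 : Cabs1 (inner (T xk) p) <= 2 * (M * d)).
    { pose proof (cs_abs1 (T xk) p). pose proof (HM xk). rewrite hx, hp in *.
      pose proof (hnorm_nonneg (T xk)). nra. }
    assert (B2 : Cabs1 (inner (T p) x') <= 2 * (M * d)).
    { pose proof (cs_abs1 (T p) x'). pose proof (HM p). rewrite hp in *.
      pose proof (hnorm_nonneg (T p)). pose proof (hnorm_nonneg x'). nra. }
    assert (B3 : Cabs1 q <= 2 * M).
    { pose proof (cs_abs1 (T xk) xk). pose proof (HM xk). rewrite hx in *.
      pose proof (hnorm_nonneg (T xk)). unfold q. nra. }
    assert (Bwq : Cabs1 (Csub w q) <= 4 * (M * d)).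
    { rewrite E2. pose proof (Cabs1_add (Cmul Cm1 (inner (T xk) p)) (Cmul Cm1 (inner (T p) x'))).
      rewrite !Cabs1_m1 in H0. lra. }
    assert (Bw : Cabs1 w <= 6 * M).
    { pose proof (Cabs1_le_sub w q). nra. }
    assert (Bql : Cabs1 (Csub q lam) < eps / 2).
    { pose proof (Cabs1_le_Cmod (Csub q lam)) as Q. unfold q, xk in Q |- *. lra. }
    pose proof (Cabs1_tri (Cmul (c, 0) (Cmul (Cconj (c, 0)) w)) lam w).
    pose proof (Cabs1_tri w lam q).
    rewrite E1 in H0. rewrite Rabs_right in H0 by lra.
    pose proof (Cabs1_nonneg w).
    assert ((c * c - 1) * Cabs1 w <= 2 * d2 * (6 * M)) by nra.
    assert (d2 <= d) by nra.
    assert (16 * M * d < eps / 2).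
    { assert (16 * M * del = eps / 2) by (unfold del; field; lra). nra. }
    nra.
Qed.
End Step.
Lemma zero_of_small (z : C) : (forall eps, eps > 0 -> Cabs1 z < eps) -> z = C0.
Proof.
  intro Hs. destruct z as [a b]. unfold Cabs1 in Hs; simpl in Hs.
  assert (Rabs a + Rabs b <= 0).
  { apply Rnot_lt_le. intro L. specialize (Hs _ L). lra. }
  pose proof (Rabs_pos a); pose proof (Rabs_pos b).
  assert (a = 0) by (destruct (Req_dec a 0) as [|Na]; auto; pose proof (Rabs_pos_lt a Na); lra).
  assert (b = 0) by (destruct (Req_dec b 0) as [|Nb]; auto; pose proof (Rabs_pos_lt b Nb); lra).
  subst. reflexivity.
Qed.

Section Lim.
Context {H : CHilbert}.

Lemma hnorm_sub_sym (a b : H) : hnorm (hsub a b) = hnorm (hsub b a).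
Proof.
  unfold hnorm. change (fst (inner (hsub a b) (hsub a b))) with (n2 (hsub a b)).
  change (fst (inner (hsub b a) (hsub b a))) with (n2 (hsub b a)).
  rewrite !n2_sub, (re_sym a b). f_equal. ring.
Qed.

Lemma limit_inner (u : nat -> H) l w c N0 : hcv u l -> (forall n, (n >= N0)%nat -> inner (u n) w = c) ->
  inner l w = c.
Proof.
  intros Cv Ev.
  assert (Csub (inner l w) c = C0).
  { apply zero_of_small. intros eps ep.
    pose proof (hnorm_nonneg w).
    destruct (Cv (eps / (2 * (hnorm w + 1)))) as [N HN].
    { apply Rdiv_lt_0_compat; lra. }
    set (n := Nat.max N N0).
    specialize (HN n (Nat.le_max_l _ _)). rewrite <- (Ev n (Nat.le_max_r _ _)).
    rewrite <- inner_sub_l. eapply Rle_lt_trans. apply cs_abs1.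
    rewrite hnorm_sub_sym.
    pose proof (hnorm_nonneg (hsub (u n) l)).
    assert (hnorm (hsub (u n) l) * (2 * (hnorm w + 1)) < eps).
    { apply (Rmult_lt_compat_r (2 * (hnorm w + 1))) in HN; [|lra].
      unfold Rdiv in HN. rewrite Rmult_assoc, Rinv_l in HN by lra. lra. }
    nra. }
  destruct (inner l w), c. unfold Csub, C0 in H0. injection H0; intros.
  apply Ceq; simpl; lra.
Qed.

(* the closed span of a family, as a double orthogonal complement *)
Definition cspan (u : nat -> H) (P : nat -> bool) (z : H) : Prop :=
  forall w, (forall m, P m = true -> inner (u m) w = C0) -> inner z w = C0.

Lemma cspan_closed u P : closed_subspace (cspan u P).
Proof.
  split; [|split; [|split]].
  - intros w _. apply inner_zero_l.
  - intros x y Hx Hy w Hw. rewrite inner_add_l, Hx, Hy by auto. apply Ceq; unfold Cadd, C0; simpl; ring.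
  - intros a x Hx w Hw. rewrite inner_scal_l, Hx by auto. apply Ceq; unfold Cmul, C0; simpl; ring.
  - intros v l Hv Cv w Hw. apply (limit_inner v l w C0 0); auto. intros n _. apply Hv; auto.
Qed.

Lemma cspan_gen u P m : P m = true -> cspan u P (u m).
Proof. intros Pm w Hw. apply Hw; auto. Qed.

Lemma cspan_pj u P v n : cspan u P (pj u P v n).
Proof.
  destruct (cspan_closed u P) as [Z [A [S _]]].
  induction n. rewrite pj_0. apply Z.
  rewrite pj_S. apply A; auto. destruct (P n) eqn:Pn; auto. apply S, cspan_gen; auto.
Qed.

Lemma cspan_orth u P Q : (forall i j, P i = true -> Q j = true -> inner (u i) (u j) = C0) ->
  forall x y, cspan u P x -> cspan u Q y -> inner x y = C0.
Proof.
  intros O x y Hx Hy. apply Hx. intros m Pm.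
  rewrite inner_conj_sym. rewrite Hy. apply Ceq; unfold Cconj, C0; simpl; ring.
  intros j Qj. rewrite inner_conj_sym, O by auto. apply Ceq; unfold Cconj, C0; simpl; ring.
Qed.

Lemma hsum_ext (f g : nat -> H) n : (forall i, (i < n)%nat -> f i = g i) -> hsum f n = hsum g n.
Proof. induction n; simpl; intros; auto. rewrite IHn, H0; auto. Qed.

Lemma hsum_split (f : nat -> H) M M' : (M <= M')%nat ->
  hsum f M' = hadd (hsum f M) (hsum (fun i => if Nat.leb M i then f i else hzero) M').
Proof.
  intros L. induction L.
  - replace (hsum (fun i => if Nat.leb M i then f i else hzero) M) with (@hzero H).
    rewrite hadd_zero; reflexivity.
    rewrite (hsum_ext _ (fun _ => hzero)).
    + clear. induction M as [|K IH]; simpl. reflexivity. rewrite <- IH. symmetry. apply hadd_zero.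
    + intros i Hi. destruct (Nat.leb_spec M i); try lia. reflexivity.
  - simpl. rewrite IHL. rewrite <- hadd_assoc. f_equal. f_equal.
    destruct (Nat.leb_spec M m); try lia. reflexivity.
Qed.

End Lim.
Lemma Rsum_split (f : nat -> R) M M' : (M <= M')%nat ->
  Rsum f M' = Rsum f M + Rsum (fun i => if Nat.leb M i then f i else 0) M'.
Proof.
  intros L. induction L.
  - rewrite (Rsum_ext (fun i => if Nat.leb M i then f i else 0) (fun _ => 0)). rewrite Rsum_const. ring.
    intros i Hi. destruct (Nat.leb_spec M i); try lia. reflexivity.
  - simpl. rewrite IHL. destruct (Nat.leb_spec M m); try lia. ring.
Qed.

Section Proj.
Context {H : CHilbert}.

Lemma hsub_hadd_l (a b : H) : hsub (hadd a b) a = b.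
Proof.
  unfold hsub. rewrite (hadd_comm a b), <- hadd_assoc, hadd_opp, hadd_zero. reflexivity.
Qed.

Lemma proj_exists (u : nat -> H) P (O : ONP u P) (v : H) : exists y, is_orth_proj (cspan u P) v y.
Proof.
  set (s := fun M => pj u P v M). set (b := fun M => bes u P v M).
  assert (Diff : forall M M', (M <= M')%nat -> n2 (hsub (s M') (s M)) = b M' - b M).
  { intros M M' L. set (P' := fun i => andb (P i) (Nat.leb M i)).
    assert (O' : ONP u P').
    { intros i j Pi Pj. unfold P' in *. apply andb_prop in Pi, Pj. apply O; tauto. }
    assert (E : hsub (s M') (s M) = pj u P' v M').
    { unfold s, pj. rewrite (hsum_split _ M M' L), hsub_hadd_l. apply hsum_ext. intros i _.
      unfold P'. destruct (Nat.leb M i), (P i); reflexivity. }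
    rewrite E, n2_pj by auto. unfold b, bes. rewrite (Rsum_split (fun i => if P i then cn2 (inner v (u i)) else 0) M M' L).
    assert (Rsum (fun i => if P' i then cn2 (inner v (u i)) else 0) M' =
            Rsum (fun i => if Nat.leb M i then if P i then cn2 (inner v (u i)) else 0 else 0) M').
    { apply Rsum_ext. intros i _. unfold P'. destruct (Nat.leb M i), (P i); reflexivity. }
    lra. }
  assert (Gr : Un_growing b).
  { intro n. unfold b. rewrite bes_S. destruct (P n); [pose proof (cn2_nonneg (inner v (u n)))|]; lra. }
  assert (Ub : has_ub b).
  { exists (n2 v). intros r [i ->]. apply bessel; auto. }
  pose proof (CV_Cauchy b (growing_cv b Gr Ub)) as Cb.
  destruct (hcomplete H s) as [y Hy].
  { intros eps ep. destruct (Cb (eps * eps)) as [N HN]. nra.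
    exists N. intros n m Hn Hm.
    change (hnorm (hsub (s n) (s m)) < eps).
    assert (n2 (hsub (s n) (s m)) < eps * eps).
    { specialize (HN n m Hn Hm). unfold R_dist in HN.
      destruct (Nat.le_ge_cases m n) as [L|L].
      - rewrite Diff by auto. apply Rabs_def2 in HN. lra.
      - rewrite <- Rabs_Ropp in HN. replace (- (b n - b m)) with (b m - b n) in HN by ring.
        assert (n2 (hsub (s n) (s m)) = n2 (hsub (s m) (s n))) as E.
        { rewrite !n2_sub, (re_sym (s n) (s m)). ring. }
        rewrite E, Diff by auto. apply Rabs_def2 in HN. lra. }
    unfold hnorm. rewrite <- (sqrt_square eps) by lra. apply sqrt_lt_1_alt. split; [apply n2_nonneg | exact H0]. }
  assert (Cv : hcv s y) by exact Hy.
  exists y. split.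
  - destruct (cspan_closed u P) as [_ [_ [_ Cl]]]. apply (Cl s y); auto. intro n. apply cspan_pj.
  - intros z Hz.
    assert (W : forall m, P m = true -> inner (u m) (hsub v y) = C0).
    { intros m Pm. rewrite inner_conj_sym.
      assert (inner (hsub v y) (u m) = C0) as E.
      { rewrite inner_sub_l. rewrite (limit_inner s y (u m) (inner v (u m)) (S m) Cv).
        - apply Ceq; unfold Csub, C0; simpl; ring.
        - intros n Hn. unfold s. rewrite pj_inner by auto. destruct (Nat.ltb_spec m n); try lia. reflexivity. }
      rewrite E. apply Ceq; unfold Cconj, C0; simpl; ring. }
    specialize (Hz _ W). rewrite inner_conj_sym, Hz. apply Ceq; unfold Cconj, C0; simpl; ring.
Qed.

End Proj.
From Stdlib Require Import Cantor ClassicalEpsilon ZArith.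

Lemma floor_nat (r : R) : 0 <= r -> exists p : nat, INR p <= r < INR p + 1.
Proof.
  intros rp. destruct (archimed r) as [A B].
  assert (z1 : (1 <= up r)%Z). { assert (0 < up r)%Z by (apply lt_0_IZR; lra). lia. }
  exists (Z.to_nat (up r - 1)).
  rewrite INR_IZR_INZ, Z2Nat.id by lia. rewrite minus_IZR. simpl. lra.
Qed.

Lemma trunc_nat (x N : R) : N > 0 -> exists p q : nat,
  Rabs (INR p - INR q) <= Rabs x * N /\ Rabs (x * N - (INR p - INR q)) < 1.
Proof.
  intros Np. destruct (Rle_lt_dec 0 x) as [xp|xn].
  - destruct (floor_nat (x * N)) as [p [P1 P2]]. nra. exists p, 0%nat. simpl.
    rewrite Rminus_0_r. pose proof (pos_INR p).
    rewrite (Rabs_right (INR p)) by lra. rewrite (Rabs_right x) by lra. split. lra.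
    apply Rabs_def1; lra.
  - destruct (floor_nat (- x * N)) as [q [P1 P2]]. nra. exists 0%nat, q. simpl.
    pose proof (pos_INR q). rewrite Rminus_0_l, Rabs_Ropp, (Rabs_right (INR q)) by lra.
    rewrite (Rabs_left x) by lra. split. lra.
    apply Rabs_def1; lra.
Qed.

Definition gridpt (j p1 q1 p2 q2 : nat) : C :=
  let N := INR j + 1 in
  let z := ((INR p1 - INR q1) / N, (INR p2 - INR q2) / N) in
  if Rle_dec (Cmod z) 1 then z else C0.

Lemma gridpt_disc j p1 q1 p2 q2 : in_closed_disc (gridpt j p1 q1 p2 q2).
Proof.
  unfold gridpt, in_closed_disc. destruct (Rle_dec _ 1); auto.
  unfold Cmod, C0; simpl. replace (0*0+0*0) with 0 by ring. rewrite sqrt_0. lra.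
Qed.

Lemma grid_approx (lam : C) (j : nat) : in_closed_disc lam ->
  exists p1 q1 p2 q2, Cabs1 (Csub (gridpt j p1 q1 p2 q2) lam) <= 2 / (INR j + 1).
Proof.
  intros D. set (N := INR j + 1). assert (Np : N > 0) by (unfold N; pose proof (pos_INR j); lra).
  destruct (trunc_nat (fst lam) N Np) as [p1 [q1 [A1 B1]]].
  destruct (trunc_nat (snd lam) N Np) as [p2 [q2 [A2 B2]]].
  exists p1, q1, p2, q2.
  set (a := (INR p1 - INR q1) / N). set (b := (INR p2 - INR q2) / N).
  assert (Ea : Rabs a <= Rabs (fst lam)).
  { unfold a, Rdiv. rewrite Rabs_mult, (Rabs_right (/ N)) by (left; apply Rinv_0_lt_compat; lra).
    apply (Rmult_le_reg_r N); auto. rewrite Rmult_assoc, Rinv_l by lra. lra. }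
  assert (Eb : Rabs b <= Rabs (snd lam)).
  { unfold b, Rdiv. rewrite Rabs_mult, (Rabs_right (/ N)) by (left; apply Rinv_0_lt_compat; lra).
    apply (Rmult_le_reg_r N); auto. rewrite Rmult_assoc, Rinv_l by lra. lra. }
  assert (Da : Rabs (a - fst lam) <= 1 / N).
  { replace (a - fst lam) with (- (fst lam * N - (INR p1 - INR q1)) / N) by (unfold a; field; lra).
    unfold Rdiv. rewrite Rabs_mult, Rabs_Ropp, (Rabs_right (/ N)) by (left; apply Rinv_0_lt_compat; lra).
    pose proof (Rinv_0_lt_compat N Np). nra. }
  assert (Db : Rabs (b - snd lam) <= 1 / N).
  { replace (b - snd lam) with (- (snd lam * N - (INR p2 - INR q2)) / N) by (unfold b; field; lra).
    unfold Rdiv. rewrite Rabs_mult, Rabs_Ropp, (Rabs_right (/ N)) by (left; apply Rinv_0_lt_compat; lra).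
    pose proof (Rinv_0_lt_compat N Np). nra. }
  assert (In : Cmod (a, b) <= 1).
  { unfold in_closed_disc, Cmod in *; simpl in *. eapply Rle_trans; [|exact D].
    apply sqrt_le_1_alt. pose proof (Rabs_pos a); pose proof (Rabs_pos b).
    rewrite <- (Rabs_sq a), <- (Rabs_sq b), <- (Rabs_sq (fst lam)), <- (Rabs_sq (snd lam)). nra. }
  unfold gridpt. fold N. fold a b. destruct (Rle_dec (Cmod (a, b)) 1); [|contradiction].
  unfold Cabs1, Csub; simpl. unfold Rdiv in *. lra.
Qed.

Definition enc (k j p1 q1 p2 q2 : nat) : nat :=
  to_nat (k, to_nat (j, to_nat (to_nat (p1, q1), to_nat (p2, q2)))).
Definition dk (n : nat) : nat := fst (of_nat n).
Definition dj (n : nat) : nat := fst (of_nat (snd (of_nat n))).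
Definition dr (n : nat) : nat * nat * nat * nat :=
  let r := snd (of_nat (snd (of_nat n))) in
  (fst (of_nat (fst (of_nat r))), snd (of_nat (fst (of_nat r))),
   fst (of_nat (snd (of_nat r))), snd (of_nat (snd (of_nat r)))).
Definition target (n : nat) : C :=
  match dr n with (p1, q1, p2, q2) => gridpt (dj n) p1 q1 p2 q2 end.
Definition tol (n : nat) : R := / (INR (dj n) + 1).

Lemma dk_enc k j p1 q1 p2 q2 : dk (enc k j p1 q1 p2 q2) = k.
Proof. unfold dk, enc. rewrite cancel_of_to. reflexivity. Qed.
Lemma dj_enc k j p1 q1 p2 q2 : dj (enc k j p1 q1 p2 q2) = j.
Proof. unfold dj, enc. rewrite cancel_of_to. cbn [fst snd]. rewrite cancel_of_to. reflexivity. Qed.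
Lemma target_enc k j p1 q1 p2 q2 : target (enc k j p1 q1 p2 q2) = gridpt j p1 q1 p2 q2.
Proof. unfold target, dr. rewrite dj_enc. unfold enc. rewrite cancel_of_to. cbn [fst snd].
  rewrite cancel_of_to. cbn [fst snd]. rewrite cancel_of_to. cbn [fst snd].
  rewrite !cancel_of_to. reflexivity. Qed.
Lemma target_disc n : in_closed_disc (target n).
Proof. unfold target. destruct (dr n) as [[[? ?] ?] ?]. apply gridpt_disc. Qed.
Lemma tol_pos n : tol n > 0.
Proof. unfold tol. apply Rinv_0_lt_compat. pose proof (pos_INR (dj n)). lra. Qed.
Section Main.
Context {H : CHilbert}.
Variable T : H -> H.
Hypothesis Tlin : bounded_operator T.
Hypothesis Hyp : forall lam, in_closed_disc lam -> ess_num_range T lam.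

Definition Spec (g : nat -> H) (n : nat) (x : H) : Prop :=
  inner x x = C1 /\ (forall i, (i < n)%nat -> inner x (g i) = C0) /\
  Cabs1 (Csub (inner (T x) x) (target n)) < tol n.

Definition stepf (g : nat -> H) (n : nat) : H := epsilon (inhabits hzero) (Spec g n).

Fixpoint E (n : nat) : nat -> H :=
  match n with
  | 0 => fun _ => hzero
  | S m => fun i => if Nat.eqb i m then stepf (E m) m else E m i
  end.

Definition e (n : nat) : H := stepf (E n) n.

Lemma E_e n i : (i < n)%nat -> E n i = e i.
Proof.
  induction n; intros L; [lia|]. simpl. destruct (Nat.eqb_spec i n).
  - subst. reflexivity.
  - apply IHn. lia.
Qed.

Definition ONn (n : nat) : Prop :=
  forall i j, (i < n)%nat -> (j < n)%nat -> inner (e i) (e j) = if Nat.eqb i j then C1 else C0.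

Lemma e_spec_of n : ONn n -> Spec (E n) n (e n).
Proof.
  intros O. unfold e, stepf. apply epsilon_spec.
  destruct (step_exists T Tlin (target n) (Hyp _ (target_disc n)) (E n) n) with (eps := tol n)
    as [x [A [B C']]].
  - intros i j Pi Pj. apply Nat.ltb_lt in Pi, Pj. rewrite !E_e by auto. apply O; auto.
  - apply tol_pos.
  - exists x. split; auto.
Qed.

Lemma ON_all n : ONn n.
Proof.
  induction n.
  - intros i j Hi. lia.
  - destruct (e_spec_of n IHn) as [A [B _]].
    intros i j Hi Hj.
    destruct (Nat.eq_dec i n), (Nat.eq_dec j n); subst.
    + rewrite Nat.eqb_refl. exact A.
    + destruct (Nat.eqb_spec n j); try lia. rewrite <- (E_e n j) by lia. apply B. lia.
    + destruct (Nat.eqb_spec i n); try lia. rewrite inner_conj_sym, <- (E_e n i), B by lia.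
      apply Ceq; unfold Cconj, C0; simpl; ring.
    + apply IHn; lia.
Qed.

Lemma e_ortho : forall i j, inner (e i) (e j) = if Nat.eqb i j then C1 else C0.
Proof. intros i j. apply (ON_all (S (Nat.max i j))); lia. Qed.

Lemma e_target n : Cabs1 (Csub (inner (T (e n)) (e n)) (target n)) < tol n.
Proof. destruct (e_spec_of n (ON_all n)) as [_ [_ C']]. exact C'. Qed.

End Main.

Theorem lemma6p1 (H : CHilbert) (T : H -> H) :
  bounded_operator T ->
  (forall lam, in_closed_disc lam -> ess_num_range T lam) ->
  exists Hk : nat -> H -> Prop,
    (forall k, closed_subspace (Hk k)) /\
    (forall k j, k <> j -> forall x y, Hk k x -> Hk j y -> inner x y = C0) /\
    (forall k lam, in_closed_disc lam -> ess_num_range_compression (Hk k) T lam).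
Proof.
  intros Tlin Hyp.
  set (ee := e T).
  assert (Oe : forall i j, inner (ee i) (ee j) = if Nat.eqb i j then C1 else C0) by (apply e_ortho; auto).
  exists (fun k => cspan ee (fun m => Nat.eqb (dk m) k)).
  split; [|split].
  - intro k. apply cspan_closed.
  - intros k j Nkj x y Hx Hy. apply (cspan_orth ee (fun m => Nat.eqb (dk m) k) (fun m => Nat.eqb (dk m) j)); auto.
    intros i i' Pi Pi'. apply Nat.eqb_eq in Pi, Pi'. rewrite Oe.
    destruct (Nat.eqb_spec i i'); subst; [congruence | reflexivity].
  - intros k lam D.
    assert (G : forall j, exists t : nat * nat * nat * nat,
      Cabs1 (Csub (gridpt j (fst (fst (fst t))) (snd (fst (fst t))) (snd (fst t)) (snd t)) lam) <= 2 / (INR j + 1)).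
    { intro j. destruct (grid_approx lam j D) as [p1 [q1 [p2 [q2 Hg]]]]. exists (p1, q1, p2, q2). exact Hg. }
    set (tt := fun j => proj1_sig (constructive_indefinite_description _ (G j))).
    assert (Htt : forall j, Cabs1 (Csub (gridpt j (fst (fst (fst (tt j)))) (snd (fst (fst (tt j)))) (snd (fst (tt j))) (snd (tt j))) lam) <= 2 / (INR j + 1)).
    { intro j. unfold tt. destruct (constructive_indefinite_description _ (G j)) as [t Ht]; simpl. exact Ht. }
    set (idx := fun j => enc k j (fst (fst (fst (tt j)))) (snd (fst (fst (tt j)))) (snd (fst (tt j))) (snd (tt j))).
    assert (Ik : forall j, dk (idx j) = k) by (intro; apply dk_enc).
    assert (Ij : forall j, dj (idx j) = j) by (intro; apply dj_enc).
    assert (ONk : ONP ee (fun m => Nat.eqb (dk m) k)) by (intros i j _ _; apply Oe).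
    set (S := cspan ee (fun m => Nat.eqb (dk m) k)).
    assert (Py : forall j, exists y, is_orth_proj S (T (ee (idx j))) y).
    { intro j. apply proj_exists; auto. }
    set (Y := fun j => proj1_sig (constructive_indefinite_description _ (Py j))).
    assert (HY : forall j, is_orth_proj S (T (ee (idx j))) (Y j)).
    { intro j. unfold Y. destruct (constructive_indefinite_description _ (Py j)) as [t Ht]; simpl. exact Ht. }
    exists (fun j => ee (idx j)). split; [|split].
    + intro j. apply cspan_gen. rewrite Ik. apply Nat.eqb_refl.
    + intros i j. rewrite Oe. destruct (Nat.eqb_spec (idx i) (idx j)) as [Eq|Ne];
        destruct (Nat.eqb_spec i j); auto.
      * exfalso. apply n. rewrite <- (Ij i), <- (Ij j), Eq. reflexivity.
      * subst. congruence.
    + exists Y. split; auto.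
      intros eps ep.
      destruct (INR_unbounded (3 / eps)) as [N HN].
      exists N. intros j Hj.
      assert (EY : inner (Y j) (ee (idx j)) = inner (T (ee (idx j))) (ee (idx j))).
      { destruct (HY j) as [_ Orth].
        assert (Sx : S (ee (idx j))) by (apply cspan_gen; rewrite Ik; apply Nat.eqb_refl).
        specialize (Orth _ Sx). rewrite inner_sub_l in Orth.
        destruct (inner (T (ee (idx j))) (ee (idx j))), (inner (Y j) (ee (idx j))).
        unfold Csub, C0 in Orth. injection Orth; intros. apply Ceq; simpl; lra. }
      rewrite EY.
      pose proof (e_target T Tlin Hyp (idx j)) as Et. fold ee in Et.
      unfold tol in Et. rewrite Ij in Et.
      replace (target (idx j)) with (gridpt j (fst (fst (fst (tt j)))) (snd (fst (fst (tt j)))) (snd (fst (tt j))) (snd (tt j))) in Et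
        by (unfold idx; symmetry; apply target_enc).
      pose proof (Htt j) as Hg.
      pose proof (Cabs1_tri (inner (T (ee (idx j))) (ee (idx j))) lam
          (gridpt j (fst (fst (fst (tt j)))) (snd (fst (fst (tt j)))) (snd (fst (tt j))) (snd (tt j)))) as Tr.
      eapply Rle_lt_trans. apply Cmod_le_Cabs1.
      assert (Jp : INR j + 1 > 0) by (pose proof (pos_INR j); lra).
      assert (3 / (INR j + 1) < eps).
      { apply le_INR in Hj. apply (Rmult_lt_reg_r (INR j + 1)); auto.
        unfold Rdiv. rewrite Rmult_assoc, Rinv_l by lra.
        apply (Rmult_lt_compat_r eps) in HN; auto. unfold Rdiv in HN. rewrite Rmult_assoc, Rinv_l in HN by lra.
        nra. }
      unfold Rdiv in *. lra.
Qed.
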